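(* Let $p(t)=a+bt+ct^2\in\mathbb C[t]$ with $a\,c\,(a+b+c)\neq 0$, let $V_{p}$ be its associated circulant matrix and $(S_{[k]})_{k\ge1}$ its sequence of column partial sums. Then [$V_{p}$ has a finite period and $(S_{[k]})_{k\geq1}$ is eventually periodic] if and only if [$b=c=-2a$, i.e. $p(t)=a(1-2t-2t^2)$, and $3a$ is a root of unity]. Moreover, in that case the period $\mu$ of $V_p$ satisfies $6\mid\mu$ and $(3a)^{\mu}=1$.
   Context: For a polynomial $p(t)=a_0+a_1t+\cdots+a_dt^d\in\mathbb C[t]$ of degree $d\ge1$ with $a_0\neq0$: the associated circulant matrix $V_p$ is the $(d+1)\times(d+1)$ matrix whose $(i,j)$ entry ($0\le i,j\le d$) is $a_{(i-j-1)\bmod (d+1)}$; thus its first row is $(a_d,a_{d-1},\dots,a_0)$ and each subsequent row is the cyclic right shift of the previous one. Let $e=(0,\dots,0,1)^T\in\mathbb C^{d+1}$. $V_p$ has a finite period if there exist integers $\mu\ge1$, $k_0\ge0$ with $V_p^{n+\mu}e=V_p^ne$ for all $n\ge k_0$; the period of $V_p$ is the smallest such $\mu$. The column partial sums are $S_{[k]}:=[t^{(k-1)(d+1)}]\dfrac{(tp(t))^k}{(1-t)(1-t^{d+1})}$ for $k\ge1$ (equivalently, the sum of the coefficients of $t^0,\dots,t^{(k-1)(d+1)}$ in the power series $(tp(t))^k/(1-t^{d+1})$). Here $d=2$. A sequence $(s_i)$ is eventually periodic if there are $N\ge1$ and $K$ with $s_{i+N}=s_i$ for all $i\ge K$. 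*)

(* Defs.v *)
(* The complex field C is modelled as R[i] = complex R for
   an arbitrary R : realType (every realType is a model of the reals). *)
From HB Require Import structures.
From mathcomp Require Import all_boot all_order all_algebra.
From mathcomp Require Export reals complex.
Set Implicit Arguments. Unset Strict Implicit. Unset Printing Implicit Defensive.
Import Order.TTheory GRing.Theory Num.Theory.
Local Open Scope ring_scope.

Section Circulant.
Variable K : comNzRingType.

Definition circulant (d : nat) (p : {poly K}) : 'M[K]_(d.+1) :=
  \matrix_(i < d.+1, j < d.+1) p`_((i + d.+1 - j - 1) %% d.+1).

Definition last_basis (d : nat) : 'cV[K]_(d.+1) :=
  \col_(i < d.+1) (i == ord_max)%:R.

Definition is_period_witness (d : nat) (V : 'M[K]_(d.+1)) (mu : nat) : Prop :=
  (0 < mu)%N /\ exists k0 : nat, forall n : nat, (k0 <= n)%N ->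
    V ^+ (n + mu) *m last_basis d = V ^+ n *m last_basis d.

Definition has_finite_period (d : nat) (V : 'M[K]_(d.+1)) : Prop :=
  exists mu, is_period_witness V mu.

Definition is_period (d : nat) (V : 'M[K]_(d.+1)) (mu : nat) : Prop :=
  is_period_witness V mu /\ forall mu', is_period_witness V mu' -> (mu <= mu')%N.

(* S_[k] = sum of the coefficients of t^0..t^((k-1)(d+1)) in the power series
   (t p(t))^k / (1 - t^(d+1)); the coefficient of t^j in that series is
   sum_{l, (d+1) l <= j} [t^(j-(d+1)l)] (t p(t))^k. *)
Definition col_partial_sum (d : nat) (p : {poly K}) (k : nat) : K :=
  \sum_(j < ((k - 1) * d.+1).+1)
     \sum_(l < j.+1 | (d.+1 * l <= j)%N) (('X * p) ^+ k)`_(j - d.+1 * l).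

Definition eventually_periodic (T : Type) (s : nat -> T) : Prop :=
  exists N K0 : nat, (1 <= N)%N /\ forall i, (K0 <= i)%N -> s (i + N)%N = s i.

Definition unit_root (z : K) : Prop := exists n : nat, (0 < n)%N /\ z ^+ n = 1.

End Circulant.

(* Main.v *)
Require Import Defs.
From HB Require Import structures.
From mathcomp Require Import all_boot all_order all_algebra.
From mathcomp Require Import reals complex.
From mathcomp Require Import ring lra zify.
Import Order.TTheory GRing.Theory Num.Theory.
Local Open Scope ring_scope.

Section B.
Variable K : comNzRingType.
Definition i0 : 'I_3 := ord0.
Definition i1 : 'I_3 := lift ord0 ord0.
Definition i2 : 'I_3 := lift ord0 (lift ord0 ord0).
Definition Fz (z : K) (x : 'cV[K]_3) := x i0 ord0 + x i1 ord0 * z + x i2 ord0 * z ^+ 2.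

Lemma Fz_circ (p : {poly K}) z x : z ^+ 3 = 1 ->
  Fz z (circulant 2 p *m x) = z * (p`_0 + p`_1 * z + p`_2 * z ^+ 2) * Fz z x.
Proof.
move=> z3.
rewrite /Fz !mxE !big_ord_recl big_ord0 /= !mxE /=.
rewrite /i0 /i1 /i2 /=.
rewrite !big_ord0.
rewrite -?[((0 + 3 - 0 - 1) %% 3)%N]/2%N -?[((0 + 3 - 1 - 1) %% 3)%N]/1%N -?[((0 + 3 - 2 - 1) %% 3)%N]/0%N.
rewrite -?[((1 + 3 - 0 - 1) %% 3)%N]/0%N -?[((1 + 3 - 1 - 1) %% 3)%N]/2%N -?[((1 + 3 - 2 - 1) %% 3)%N]/1%N.
rewrite -?[((2 + 3 - 0 - 1) %% 3)%N]/1%N -?[((2 + 3 - 1 - 1) %% 3)%N]/0%N -?[((2 + 3 - 2 - 1) %% 3)%N]/2%N.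
set x0 := x ord0 ord0. set x1 := x (lift ord0 ord0) ord0. set x2 := x _ ord0.
apply/eqP; rewrite -subr_eq0.
set a := p`_0; set b := p`_1; set c := p`_2.
have -> : c * x0 + (b * x1 + (a * x2 + 0)) + (a * x0 + (c * x1 + (b * x2 + 0))) * z +
  (b * x0 + (a * x1 + (c * x2 + 0))) * z ^+ 2 - z * (a + b * z + c * z ^+ 2) * (x0 + x1 * z + x2 * z ^+ 2)
  = (1 - z ^+ 3) * (a * x2 + b * x1 + b * x2 * z + c * (x0 + x1 * z + x2 * z ^+ 2)) by ring.
by rewrite z3 subrr mul0r.
Qed.

Lemma Fz_e z : Fz z (@last_basis K 2) = z ^+ 2.
Proof. by rewrite /Fz !mxE /= mul0r !add0r mul1r. Qed.

Lemma Fz_sub_aux (u0 u1 u2 v0 v1 v2 z : K) :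
  u0 - v0 + (u1 - v1) * z + (u2 - v2) * z ^+ 2 =
  u0 + u1 * z + u2 * z ^+ 2 - (v0 + v1 * z + v2 * z ^+ 2).
Proof. ring. Qed.

Lemma Fz_sub z (x y : 'cV[K]_3) : Fz z (x - y) = Fz z x - Fz z y.
Proof. rewrite /Fz !mxE; exact: Fz_sub_aux. Qed.

Lemma Fz_pow (p : {poly K}) z n : z ^+ 3 = 1 ->
  Fz z (circulant 2 p ^+ n *m @last_basis K 2) =
  z ^+ 2 * (z * (p`_0 + p`_1 * z + p`_2 * z ^+ 2)) ^+ n.
Proof.
move=> z3; elim: n => [|n IH].
  by rewrite expr0 mul1mx Fz_e expr0 mulr1.
rewrite exprS -mulmxE -mulmxA Fz_circ // IH; set l := _ ^+ n; rewrite (exprS _ n) -/l; ring.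
Qed.
End B.
Arguments Fz {K} z x.
Section Comb.
Variable K : comNzRingType.

Lemma shift_sum (g : nat -> K) N s :
  \sum_(j < N.+1) (s <= j)%N%:R * g (j - s)%N =
  \sum_(m < N.+1) (m + s <= N)%N%:R * g m.
Proof.
elim: N s => [|N IH] s.
  rewrite !big_ord1 /=; case: s => [|s] //=.
case: s => [|s].
  apply: eq_bigr => i _; rewrite addn0 leq0n subn0.
  by rewrite -ltnS ltn_ord.
rewrite big_ord_recl /= mul0r add0r [RHS]big_ord_recr /=.
rewrite (_ : (N.+1 + s.+1 <= N.+1)%N = false) ?mul0r ?addr0; last lia.
rewrite (IH s); apply: eq_bigr => i _.
by rewrite /bump /= addnS ltnS.
Qed.

Lemma count_sum N m : (m <= N)%N ->
  \sum_(l < N.+1) (m + 3 * l <= N)%N%:R = ((N - m) %/ 3 + 1)%N%:R :> K.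
Proof.
move=> hm.
have hn : ((N - m) %/ 3 + 1 <= N.+1)%N.
  have := leq_div (N - m) 3; lia.
transitivity (\sum_(l < N.+1 | (l < (N - m) %/ 3 + 1)%N) (1 : K)).
  rewrite [RHS]big_mkcond /=; apply: eq_bigr => i _.
  have -> : (m + 3 * i <= N)%N = (i < (N - m) %/ 3 + 1)%N.
    apply/idP/idP => h; lia.
  by case: ifP.
by rewrite -(big_ord_widen _ (fun _ => (1 : K)) hn) sumr_const card_ord.
Qed.

Lemma double_sum (g : nat -> K) N :
  \sum_(j < N.+1) \sum_(l < j.+1 | (3 * l <= j)%N) g (j - 3 * l)%N =
  \sum_(m < N.+1) g m * ((N - m) %/ 3 + 1)%N%:R.
Proof.
transitivity (\sum_(j < N.+1) \sum_(l < N.+1) (3 * l <= j)%N%:R * g (j - 3 * l)%N).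
  apply: eq_bigr => j _.
  rewrite (big_ord_widen_cond N.+1 (fun l => (3 * l <= j)%N) (fun l => g (j - 3 * l)%N) (ltn_ord j)) big_mkcond /=.
  apply: eq_bigr => l _.
  case: (leqP (3 * l) j) => h /=.
    by rewrite (_ : (l < j.+1)%N = true) ?mul1r //; lia.
  by rewrite mul0r.
rewrite exchange_big /=.
under eq_bigr do rewrite shift_sum.
rewrite exchange_big /=.
apply: eq_bigr => m _.
rewrite -count_sum; last by rewrite -ltnS.
rewrite mulr_sumr; apply: eq_bigr => l _; by rewrite mulrC.
Qed.
End Comb.

Section Main.
Variable R : realType.
Local Notation C := (R[i]).

Lemma exists_w : exists w : C, w ^+ 2 + w + 1 = 0.
Proof.
have [x hx] := @solve_monicpoly C 2 (fun i => -1) isT.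
exists x; move: hx; rewrite !big_ord_recr big_ord0 /= add0r => ->; ring.
Qed.

Variable w : C.
Hypothesis hw : w ^+ 2 + w + 1 = 0.

Lemma w3 : w ^+ 3 = 1.
Proof.
have -> : w ^+ 3 = (w - 1) * (w ^+ 2 + w + 1) + 1 by ring.
by rewrite hw mulr0 add0r.
Qed.

Lemma three_neq0 : (3 : C) != 0.
Proof. by rewrite pnatr_eq0. Qed.

Lemma w_neq0 : w != 0.
Proof. apply/eqP => h; move: hw; rewrite h expr0n /= !add0r; apply/eqP; exact: oner_neq0. Qed.

Lemma w_neq1 : w != 1.
Proof. apply/eqP => h; move: hw; rewrite h expr1n; apply/eqP.
have -> : (1 + 1 + 1 : C) = 3 by ring. exact: three_neq0. Qed.

Lemma w2_neq1 : w ^+ 2 != 1.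
Proof. apply/eqP => h.
have h1 : w = -2 by apply/eqP; rewrite -subr_eq0; rewrite -hw h; apply/eqP; ring.
move: h; rewrite h1; apply/eqP. rewrite -subr_eq0.
have -> : ((-2) ^+ 2 - 1 : C) = 3 by ring. exact: three_neq0. Qed.

Lemma wexp n : w ^+ n = w ^+ (n %% 3).
Proof. by rewrite {1}(divn_eq n 3) exprD mulnC exprM w3 expr1n mul1r. Qed.

Lemma normw : `|w| = 1.
Proof.
apply/eqP; rewrite -(@pexpr_eq1 _ _ 3) //.
by rewrite -normrX w3 normr1.
Qed.

Lemma conjw : w^* = w ^+ 2.
Proof.
have h : w * w^* = 1 by rewrite -normCK normw expr1n.
have h2 : w * w ^+ 2 = 1 by rewrite -w3; ring.
apply: (mulfI w_neq0). by rewrite h h2.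
Qed.


Lemma col3_eq0 (x : 'cV[C]_3) : x i0 ord0 = 0 -> x i1 ord0 = 0 -> x i2 ord0 = 0 -> x = 0.
Proof.
move=> h0 h1 h2; apply/matrixP => i j; rewrite mxE (ord1 j).
case: i => [[|[|[|//]]] hi].
- by rewrite -h0; congr (x _ _); apply/val_inj.
- by rewrite -h1; congr (x _ _); apply/val_inj.
- by rewrite -h2; congr (x _ _); apply/val_inj.
Qed.

Lemma Fz_inj (x : 'cV[C]_3) : Fz 1 x = 0 -> Fz w x = 0 -> Fz (w ^+ 2) x = 0 -> x = 0.
Proof.
rewrite /Fz -exprM (wexp (2 * 2)) /= expr1.
set x0 := x i0 ord0; set x1 := x i1 ord0; set x2 := x i2 ord0 => e1 ew ew2.
have h3 : forall y : C, 3 * y = 0 -> y = 0.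
  by move=> y /eqP; rewrite mulf_eq0 (negbTE three_neq0) /= => /eqP.
apply: col3_eq0; apply: h3.
- have -> : 3 * x0 = (x0 + x1 * 1 + x2 * 1 ^+ 2) + (x0 + x1 * w + x2 * w ^+ 2)
     + (x0 + x1 * w ^+ 2 + x2 * w) - (x1 + x2) * (w ^+ 2 + w + 1) by ring.
  by rewrite e1 ew ew2 hw; ring.
- have -> : 3 * x1 = (x0 + x1 * 1 + x2 * 1 ^+ 2) + w ^+ 2 * (x0 + x1 * w + x2 * w ^+ 2)
     + w * (x0 + x1 * w ^+ 2 + x2 * w) - (w ^+ 2 + w + 1) * (x0 + 2 * x1 * (w - 1) + x2 * (w ^+ 2 - w + 1)) by ring.
  by rewrite e1 ew ew2 hw; ring.
- have -> : 3 * x2 = (x0 + x1 * 1 + x2 * 1 ^+ 2) + w * (x0 + x1 * w + x2 * w ^+ 2)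
     + w ^+ 2 * (x0 + x1 * w ^+ 2 + x2 * w) - (w ^+ 2 + w + 1) * (x0 + x1 * (w ^+ 2 - w + 1) + 2 * x2 * (w - 1)) by ring.
  by rewrite e1 ew ew2 hw; ring.
Qed.


Lemma by_hw (Q x y : C) : x - y = (w ^+ 2 + w + 1) * Q -> x = y.
Proof. by rewrite hw mul0r => /eqP; rewrite subr_eq0 => /eqP. Qed.

Lemma size_Xp_exp (p : {poly C}) k : (size p <= 3)%N -> (size (('X * p) ^+ k) <= (3 * k).+1)%N.
Proof.
move=> hp; elim: k => [|k IH]; first by rewrite expr0 size_poly1.
rewrite exprS; apply: (leq_trans (size_polyMleq _ _)).
have h1 : (size ('X * p)%R <= 4)%N.
  apply: (leq_trans (size_polyMleq _ _)); rewrite size_polyX; lia.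
lia.
Qed.

Lemma r_identity m : 3 * ((3 - m %% 3) %% 3)%N%:R =
  3 + (2 * w ^+ 2 + w) * w ^+ m + (2 * w + w ^+ 2) * (w ^+ 2) ^+ m :> C.
Proof.
rewrite -exprM (wexp m) (wexp (2 * m)) -modnMmr.
move: (ltn_pmod m (isT : (0 < 3)%N)); case: (m %% 3)%N => [|[|[|//]]] _.
- rewrite -[((3 - 0) %% 3)%N]/0%N -?[((2 * 0) %% 3)%N]/0%N.
  by apply: (by_hw (-3)); ring.
- rewrite -[((3 - 1) %% 3)%N]/2%N -?[((2 * 1) %% 3)%N]/2%N.
  by apply: (by_hw (-(w ^+ 2 + 3 * w - 3))); ring.
- rewrite -[((3 - 2) %% 3)%N]/1%N -?[((2 * 2) %% 3)%N]/1%N.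
  by apply: (by_hw (-(2 * w ^+ 2))); ring.
Qed.

Lemma S_formula (p : {poly C}) k : (size p <= 3)%N -> (0 < k)%N ->
  9 * col_partial_sum 2 p k =
  9 * k%:R * p.[1] ^+ k - 3 * k%:R * p.[1] ^+ k.-1 * (p.[1] + p^`().[1])
  - (3 * p.[1] ^+ k + (2 * w ^+ 2 + w) * (w * p.[w]) ^+ k
     + (2 * w + w ^+ 2) * (w ^+ 2 * p.[w ^+ 2]) ^+ k).
Proof.
move=> hp hk.
have hf : (size (('X * p) ^+ k) <= (3 * k).+1)%N by exact: size_Xp_exp.
have e0 : 3 * col_partial_sum 2 p k = \sum_(m < (3 * k).+1) (('X * p) ^+ k)`_m *
    ((3 * k)%N%:R - m%:R - ((3 - m %% 3) %% 3)%N%:R).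
  rewrite /col_partial_sum.
  have := double_sum C (fun m => (('X * p) ^+ k)`_m) ((k - 1) * 3); rewrite /= => ->.
  rewrite mulr_sumr.
  have hle : (((k - 1) * 3).+1 <= (3 * k).+1)%N by lia.
  rewrite (big_ord_widen (3 * k).+1 (fun m => 3 * ((('X * p) ^+ k)`_m * (((k - 1) * 3 - m) %/ 3 + 1)%N%:R)) hle).
  rewrite big_mkcond /=; apply: eq_bigr => m _.
  have hm3 := ltn_ord m.
  case: ifP => hm.
    have -> : ((3 * k)%N%:R : C) = (3 * (((k - 1) * 3 - m) %/ 3 + 1) + m + (3 - m %% 3) %% 3)%N%:R by congr (_%:R); lia.
    rewrite !natrD; ring.
  have -> : ((3 * k)%N%:R : C) = (m + (3 - m %% 3) %% 3)%N%:R by move/negbT: hm => hm; congr (_%:R); lia.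
  rewrite !natrD; ring.
have hsum : forall z, (('X * p) ^+ k).[z] = \sum_(m < (3 * k).+1) (('X * p) ^+ k)`_m * z ^+ m.
  by move=> z; rewrite (horner_coef_wide _ hf).
have fz : forall z, (('X * p) ^+ k).[z] = (z * p.[z]) ^+ k.
  by move=> z; rewrite horner_exp hornerM hornerX.
have e1 : (('X * p) ^+ k).[1] = \sum_(m < (3 * k).+1) (('X * p) ^+ k)`_m.
  by rewrite hsum; apply: eq_bigr => m _; rewrite expr1n mulr1.
have e2 : (('X * p) ^+ k)^`().[1] = \sum_(m < (3 * k).+1) (('X * p) ^+ k)`_m * m%:R.
  have hf' : (size (('X * p) ^+ k)^`() <= 3 * k)%N.
    apply/leq_sizeP => j hj; rewrite coef_deriv.
    by move/leq_sizeP: hf => ->; [rewrite mul0rn | lia].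
  rewrite (horner_coef_wide _ hf') big_ord_recl /= mulr0 add0r.
  by apply: eq_bigr => m _; rewrite coef_deriv /bump /= add1n expr1n mulr1 mulr_natr.
have e3 : 3 * \sum_(m < (3 * k).+1) (('X * p) ^+ k)`_m * ((3 - m %% 3) %% 3)%N%:R
   = 3 * (('X * p) ^+ k).[1] + (2 * w ^+ 2 + w) * (('X * p) ^+ k).[w]
     + (2 * w + w ^+ 2) * (('X * p) ^+ k).[w ^+ 2].
  rewrite !hsum !mulr_sumr -!big_split /=; apply: eq_bigr => m _.
  rewrite mulrCA r_identity expr1n; move: (w ^+ m) ((w ^+ 2) ^+ m) => u v; ring.
have e4 : \sum_(m < (3 * k).+1) (('X * p) ^+ k)`_m *
    ((3 * k)%N%:R - m%:R - ((3 - m %% 3) %% 3)%N%:R) =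
    (3 * k)%N%:R * \sum_(m < (3 * k).+1) (('X * p) ^+ k)`_m
    - \sum_(m < (3 * k).+1) (('X * p) ^+ k)`_m * m%:R
    - \sum_(m < (3 * k).+1) (('X * p) ^+ k)`_m * ((3 - m %% 3) %% 3)%N%:R.
  rewrite mulr_sumr -!sumrB; apply: eq_bigr => m _; ring.
have hd : (('X * p) ^+ k)^`().[1] = (p.[1] + p^`().[1]) * p.[1] ^+ k.-1 * k%:R.
  rewrite deriv_exp derivM derivX hornerMn !hornerE.
  by rewrite mulr_natr.
have -> : 9 * col_partial_sum 2 p k = 3 * (3 * col_partial_sum 2 p k) by ring.
rewrite e0 e4 -e1 -e2 hd mulrBr e3 !fz mul1r natrM.
move: (p.[1] ^+ k) (p.[1] ^+ k.-1) ((w * p.[w]) ^+ k) ((w ^+ 2 * p.[w ^+ 2]) ^+ k) => A B D E.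
ring.
Qed.

Lemma w2_3 : (w ^+ 2) ^+ 3 = 1.
Proof. by rewrite -exprM mulnC exprM w3 expr1n. Qed.

Lemma lam_witness (p : {poly C}) mu k0 z : z ^+ 3 = 1 -> z != 0 ->
  (forall n, (k0 <= n)%N -> circulant 2 p ^+ (n + mu) *m @last_basis C 2 =
                           circulant 2 p ^+ n *m @last_basis C 2) ->
  (z * (p`_0 + p`_1 * z + p`_2 * z ^+ 2)) ^+ (k0 + mu) =
  (z * (p`_0 + p`_1 * z + p`_2 * z ^+ 2)) ^+ k0.
Proof.
move=> z3 hz H; have := H k0 (leqnn _).
move/(congr1 (Fz z)); rewrite !Fz_pow //.
by apply: mulfI; rewrite expf_neq0.
Qed.

Lemma witness_of (p : {poly C}) mu :
  (forall z, z ^+ 3 = 1 -> (z == 1) || (z == w) || (z == w ^+ 2) ->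
     (z * (p`_0 + p`_1 * z + p`_2 * z ^+ 2)) ^+ mu = 1) ->
  forall n, circulant 2 p ^+ (n + mu) *m @last_basis C 2 =
            circulant 2 p ^+ n *m @last_basis C 2.
Proof.
move=> H n; apply/eqP; rewrite -subr_eq0; apply/eqP; apply: Fz_inj.
- have h1 : (1 : C) ^+ 3 = 1 by rewrite expr1n.
  by rewrite Fz_sub !(Fz_pow _ _ _ _ h1) exprD H ?eqxx // mulr1 subrr.
- by rewrite Fz_sub !(Fz_pow _ _ _ _ w3) exprD H ?w3 ?eqxx ?orbT // mulr1 subrr.
- by rewrite Fz_sub !(Fz_pow _ _ _ _ w2_3) exprD H ?w2_3 ?eqxx ?orbT // mulr1 subrr.
Qed.

Lemma cD (u v : C) : (u + v)^* = u^* + v^*. Proof. by rewrite rmorphD. Qed.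
Lemma cB (u v : C) : (u - v)^* = u^* - v^*. Proof. by rewrite rmorphB. Qed.
Lemma cM (u v : C) : (u * v)^* = u^* * v^*. Proof. by rewrite rmorphM. Qed.
Lemma cX (u : C) n : (u ^+ n)^* = u^* ^+ n. Proof. by rewrite rmorphXn. Qed.

Lemma three_neq1 : (3 : C) != 1.
Proof.
apply/eqP => h; have e : (2 : C) = 3 - 1 by ring.
move: e; rewrite h subrr => /eqP.
by apply/eqP; rewrite pnatr_eq0.
Qed.

Lemma unit_norm (l : C) mu k0 : (0 < mu)%N -> l ^+ (k0 + mu) = l ^+ k0 -> l = 0 \/ l * l^* = 1.
Proof.
move=> hmu h; have [->|l0] := eqVneq l 0; [by left | right].
have : l ^+ mu = 1.
  by apply: (mulfI (expf_neq0 k0 l0)); rewrite -exprD h mulr1.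
move=> /(congr1 Num.norm); rewrite normrX normr1 => /eqP; rewrite pexpr_eq1 // => /eqP hn.
by rewrite -normCK hn expr1n.
Qed.

Lemma geom (a c : C) : a != 0 ->
  (a + (-2 * a) + c) * (a + (-2 * a) + c)^* = 1 ->
  (w * (a + (-2 * a) * w + c * w ^+ 2) = 0 \/
   w * (a + (-2 * a) * w + c * w ^+ 2) * (w * (a + (-2 * a) * w + c * w ^+ 2))^* = 1) ->
  (w ^+ 2 * (a + (-2 * a) * w ^+ 2 + c * (w ^+ 2) ^+ 2) = 0 \/
   w ^+ 2 * (a + (-2 * a) * w ^+ 2 + c * (w ^+ 2) ^+ 2) *
     (w ^+ 2 * (a + (-2 * a) * w ^+ 2 + c * (w ^+ 2) ^+ 2))^* = 1) ->
  c = -2 * a.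
Proof.
move=> ha h0 h1 h2.
have e0 : a + (-2 * a) + c = (c + 2 * a) - 3 * a by ring.
have e1 : w * (a + (-2 * a) * w + c * w ^+ 2) = (c + 2 * a) + 3 * a * w.
  by apply: (by_hw (c * (w - 1) - 2 * a)); ring.
have e2 : w ^+ 2 * (a + (-2 * a) * w ^+ 2 + c * (w ^+ 2) ^+ 2) = (c + 2 * a) + 3 * a * w ^+ 2.
  by apply: (by_hw (c * (w - 1) * (w ^+ 3 + 1) - 2 * a * (w ^+ 2 - w + 1))); ring.
suff hx : c + 2 * a = 0.
  by apply/eqP; rewrite -subr_eq0 -hx; apply/eqP; ring.
rewrite e0 in h0; rewrite e1 in h1; rewrite e2 in h2.
move: h0 h1 h2; move: (c + 2 * a) (3 * a) (mulf_neq0 three_neq0 ha) => x A hA h0 h1 h2.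
have hB : A^* != 0 by rewrite conjC_eq0.
have cj1 : (x + A * w)^* = x^* + A^* * w ^+ 2.
  by rewrite cD cM conjw.
have cj2 : (x + A * w ^+ 2)^* = x^* + A^* * w.
  by rewrite cD cM cX conjw -exprM (wexp (2 * 2)) expr1.
have z1 : x + A * w = 0 -> x^* + A^* * w ^+ 2 = 0 by move=> h; rewrite -cj1 h conjC0.
have z2 : x + A * w ^+ 2 = 0 -> x^* + A^* * w = 0 by move=> h; rewrite -cj2 h conjC0.
have yx : x^* = 0 -> x = 0 by move/eqP; rewrite conjC_eq0 => /eqP.
rewrite cB in h0; rewrite cj1 in h1; rewrite cj2 in h2.
move: h0 h1 h2 z1 z2 yx hB; move: (x^*) (A^*) => Y B h0 h1 h2 z1 z2 yx hB.
have bad : forall (Q : C), Q = 1 -> 3 * Q = 1 -> False.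
  by move=> Q -> /eqP; rewrite mulr1 (negbTE three_neq1).
have nz : A * (w * (w - 1)) != 0.
  by rewrite !mulf_neq0 // ?w_neq0 // subr_eq0 w_neq1.
case: h1 => [h1|h1].
  have hY := z1 h1.
  move/eqP: h1; rewrite addr_eq0 => /eqP hX; move/eqP: hY; rewrite addr_eq0 => /eqP hY.
  rewrite hX hY in h0 h2.
  have hAB : A * B = 1.
    by rewrite -h0; symmetry; apply: (by_hw (A * B * w)); ring.
  case: h2 => [h2|h2].
    by exfalso; move/eqP: nz; apply; rewrite -h2; ring.
  exfalso; apply: (bad (A * B) hAB).
  have e : (- (A * w) + A * w ^+ 2) * (- (B * w ^+ 2) + B * w) = 3 * (A * B).
    by apply: (by_hw (A * B * (- w ^+ 2 + 3 * w - 3))); ring.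
  by rewrite -e h2.
case: h2 => [h2|h2].
  have hY := z2 h2.
  move/eqP: h2; rewrite addr_eq0 => /eqP hX; move/eqP: hY; rewrite addr_eq0 => /eqP hY.
  rewrite hX hY in h0 h1.
  have hAB : A * B = 1.
    by rewrite -h0; symmetry; apply: (by_hw (A * B * w)); ring.
  exfalso; apply: (bad (A * B) hAB).
  have e : (- (A * w ^+ 2) + A * w) * (- (B * w) + B * w ^+ 2) = 3 * (A * B).
    by apply: (by_hw (A * B * (- w ^+ 2 + 3 * w - 3))); ring.
  by rewrite -e h1.
have i1 : - w * (x * B + w * A * Y) = 0.
  have : (x + A * w) * (Y + B * w ^+ 2) - (x - A) * (Y - B) = - w * (x * B + w * A * Y).
    by apply: (by_hw (x * B + A * Y + A * B * (w - 1))); ring.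
  by rewrite h1 h0 subrr => <-.
have i2 : - w * (w * x * B + A * Y) = 0.
  have : (x + A * w ^+ 2) * (Y + B * w) - (x - A) * (Y - B) = - w * (w * x * B + A * Y).
    by apply: (by_hw (x * B + A * Y + A * B * (w - 1))); ring.
  by rewrite h2 h0 subrr => <-.
have nw : - w != 0 by rewrite oppr_eq0 w_neq0.
move/eqP: i1; rewrite mulf_eq0 (negbTE nw) /= => /eqP i1.
move/eqP: i2; rewrite mulf_eq0 (negbTE nw) /= => /eqP i2.
have : A * Y * (w ^+ 2 - 1) = 0.
  have -> : A * Y * (w ^+ 2 - 1) = w * (x * B + w * A * Y) - (w * x * B + A * Y) by ring.
  by rewrite i1 i2 mulr0 subr0.
move/eqP; rewrite !mulf_eq0 (negbTE hA) subr_eq0 (negbTE w2_neq1) orbF /= => /eqP.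
exact: yx.
Qed.

Section Poly.
Variables a b c : C.
Local Notation P := (a%:P + b *: 'X + c *: 'X^2).

Lemma P0 : P`_0 = a. Proof. by rewrite !coefE /=; ring. Qed.
Lemma P1 : P`_1 = b. Proof. by rewrite !coefE /=; ring. Qed.
Lemma P2 : P`_2 = c. Proof. by rewrite !coefE /=; ring. Qed.
Lemma Psize : (size P <= 3)%N.
Proof. apply/leq_sizeP => j hj; rewrite !coefE.
by case: j hj => [|[|[|j]]] //= _; ring. Qed.
Lemma Phorner z : P.[z] = a + b * z + c * z ^+ 2.
Proof. by rewrite !hornerE. Qed.
Lemma Pderiv : P^`().[1] = b + 2 * c.
Proof. rewrite !derivE !hornerE /=; ring. Qed.

Lemma lamP z : z * (P`_0 + P`_1 * z + P`_2 * z ^+ 2) = z * P.[z].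
Proof. by rewrite P0 P1 P2 Phorner. Qed.

Lemma P1eval : P.[1] = a + b + c.
Proof. by rewrite Phorner expr1n !mulr1. Qed.

Lemma lam_per mu k0 :
  (forall n, (k0 <= n)%N -> circulant 2 P ^+ (n + mu) *m @last_basis C 2 =
                           circulant 2 P ^+ n *m @last_basis C 2) ->
  forall z, z ^+ 3 = 1 -> z != 0 -> forall q n, (k0 <= n)%N ->
    (z * P.[z]) ^+ (n + q * mu) = (z * P.[z]) ^+ n.
Proof.
move=> Hk0 z z3 hz.
have Hl1 : forall n, (k0 <= n)%N -> (z * P.[z]) ^+ (n + mu) = (z * P.[z]) ^+ n.
  move=> n hn; have := @lam_witness P mu k0 z z3 hz Hk0; rewrite lamP => h.
  by rewrite -(subnKC hn) addnAC exprD h -exprD.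
elim=> [|q IH] n hn; first by rewrite mul0n addn0.
by rewrite mulSn (addnC mu) addnA Hl1 ?IH //; lia.
Qed.

Lemma S_per N K0 :
  (forall i, (K0 <= i)%N -> col_partial_sum 2 P (i + N) = col_partial_sum 2 P i) ->
  forall q i, (K0 <= i)%N -> col_partial_sum 2 P (i + q * N) = col_partial_sum 2 P i.
Proof.
move=> HS; elim=> [|q IH] i hi; first by rewrite mul0n addn0.
by rewrite mulSn (addnC N) addnA HS ?IH //; lia.
Qed.

Lemma forward : a * c * (a + b + c) != 0 ->
  has_finite_period (circulant 2 P) ->
  eventually_periodic (fun k : nat => col_partial_sum 2 P k) ->
  b = -2 * a /\ c = -2 * a /\ unit_root (3 * a).
Proof.
move=> habc [mu [mu0 [k0 Hk0]]] [N [K0 [N1 HS]]].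
have ha : a != 0 by move: habc; rewrite !mulf_eq0 negb_or => /andP [/norP []].
have hs : a + b + c != 0 by move: habc; rewrite !mulf_eq0 negb_or => /andP [].
have Hl := @lam_per mu k0 Hk0.
have HSq := @S_per N K0 HS.
have h1 : (1 : C) ^+ 3 = 1 by rewrite expr1n.
have Hs : forall q n, (k0 <= n)%N -> P.[1] ^+ (n + q * mu) = P.[1] ^+ n.
  by move=> q n hn; have := Hl 1 h1 (oner_neq0 _) q n hn; rewrite !mul1r.
have smu : P.[1] ^+ mu = 1.
  have := Hs 1%N k0 (leqnn _); rewrite mul1n exprD => h.
  have hs' : P.[1] != 0 by rewrite P1eval.
  by apply: (mulfI (expf_neq0 k0 hs')); rewrite h mulr1.
set k := (K0 + k0).+1.
have eS : col_partial_sum 2 P (k + mu * N) = col_partial_sum 2 P k.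
  by apply: HSq; rewrite /k; lia.
have hk1 : (0 < k + mu * N)%N by rewrite /k; lia.
have F1 := @S_formula P (k + mu * N) Psize hk1.
have F0 := @S_formula P k Psize (ltn0Sn (K0 + k0)).
rewrite -/k in F0.
rewrite eS in F1.
have em1 : (k + mu * N).-1 = (K0 + k0) + N * mu by rewrite /k addSn /= mulnC.
have hk0 : (k0 <= k)%N by rewrite /k; lia.
have hk0' : (k0 <= K0 + k0)%N by lia.
have w2n : w ^+ 2 != 0 by rewrite expf_neq0 // w_neq0.
rewrite em1 Pderiv (mulnC mu N) in F1.
rewrite (Hs N k hk0) (Hs N _ hk0') (Hl w w3 w_neq0 N k hk0) (Hl _ w2_3 w2n N k hk0) in F1.
rewrite Pderiv /k /= in F0.
rewrite /k exprS in F1 F0.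
rewrite F0 P1eval natrD in F1.
move: F1; set D := P.[1] ^+ (K0 + k0); set k' := ((K0 + k0).+1)%:R.
set L1 := (w * P.[w]) ^+ _; set L2 := (w ^+ 2 * P.[w ^+ 2]) ^+ _.
rewrite !exprS.
have hD : (a + b + c) ^+ (K0 + k0) != 0 by rewrite expf_neq0.
have hT : (N * mu)%:R != 0 :> C by rewrite pnatr_eq0 muln_eq0 negb_or -!lt0n N1 mu0.
move: hD; set Dk := (a + b + c) ^+ (K0 + k0) => hD.
clearbody L1 L2 Dk k'.
move=> /eqP; rewrite eq_sym -subr_eq0 => /eqP F1.
have key : 3 * (N * mu)%:R * Dk * (2 * a + b) = 0 by rewrite -F1; ring.
move/eqP: key; rewrite !mulf_eq0 (negbTE three_neq0) (negbTE hT) (negbTE hD) /= => /eqP hab.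
have hb : b = -2 * a.
  by apply/eqP; rewrite -subr_eq0 -hab; apply/eqP; ring.
have U : forall z, z ^+ 3 = 1 -> z != 0 -> z * P.[z] = 0 \/ z * P.[z] * (z * P.[z])^* = 1.
  move=> z z3 hz; apply: (@unit_norm _ mu k0 mu0).
  by have := Hl z z3 hz 1%N k0 (leqnn _); rewrite mul1n.
have U1 := U 1 h1 (oner_neq0 _); rewrite mul1r P1eval in U1.
have U1' : (a + b + c) * (a + b + c)^* = 1.
  by case: U1 => // h; move: hs; rewrite h eqxx.
have Uw := U w w3 w_neq0; have Uw2 := U _ w2_3 w2n.
rewrite !Phorner hb in Uw Uw2; rewrite hb in U1'.
have hc := @geom a c ha U1' Uw Uw2.
split => //; split => //.
exists (2 * mu)%N; split; first by lia.
rewrite P1eval hb hc in smu.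
have -> : (3 * a) ^+ (2 * mu) = ((a + -2 * a + -2 * a) ^+ 2) ^+ mu.
  by rewrite exprM; congr (_ ^+ _); ring.
by rewrite exprAC smu expr1n.
Qed.

Lemma lam_vals : b = -2 * a -> c = -2 * a ->
  [/\ P.[1] = - (3 * a), w * P.[w] = 3 * a * w & w ^+ 2 * P.[w ^+ 2] = 3 * a * w ^+ 2].
Proof.
move=> hb hc; split.
- by rewrite P1eval hb hc; ring.
- by rewrite Phorner hb hc; apply: (by_hw (-2 * a * w)); ring.
- by rewrite Phorner hb hc; apply: (by_hw (-2 * a * w ^+ 2 * (w ^+ 2 - w + 1))); ring.
Qed.

Lemma backward : b = -2 * a -> c = -2 * a -> unit_root (3 * a) ->
  has_finite_period (circulant 2 P) /\
  eventually_periodic (fun k : nat => col_partial_sum 2 P k).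
Proof.
move=> hb hc [n [n0 hn]].
have [v1 vw vw2] := lam_vals hb hc.
set A := 3 * a in hn v1 vw vw2.
have e6 : forall x : C, x ^+ 6 = A ^+ 6 -> x ^+ (6 * n) = 1.
  by move=> x hx; rewrite exprM hx exprAC hn expr1n.
have p1 : (- A) ^+ (6 * n) = 1 by apply: e6; ring.
have pw : (A * w) ^+ (6 * n) = 1.
  apply: e6; have -> : (A * w) ^+ 6 = A ^+ 6 * (w ^+ 3) ^+ 2 by ring.
  by rewrite w3 expr1n mulr1.
have pw2 : (A * w ^+ 2) ^+ (6 * n) = 1.
  apply: e6; have -> : (A * w ^+ 2) ^+ 6 = A ^+ 6 * (w ^+ 3) ^+ 4 by ring.
  by rewrite w3 expr1n mulr1.
split.
  exists (6 * n)%N; split; first by lia.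
  exists 0%N => m _; apply: witness_of => z z3 /orP [/orP [] | ] /eqP ->; rewrite lamP.
  - by rewrite mul1r v1.
  - by rewrite vw.
  - by rewrite vw2.
have Sform : forall k, (0 < k)%N -> 9 * col_partial_sum 2 P k =
    - (3 * (- A) ^+ k + (2 * w ^+ 2 + w) * (A * w) ^+ k + (2 * w + w ^+ 2) * (A * w ^+ 2) ^+ k).
  move=> k hk; rewrite (@S_formula P k Psize hk) Pderiv vw vw2 v1 hb hc.
  case: k hk => // k _; rewrite !exprS /=.
  rewrite /A; move: ((- (3 * a)) ^+ k) ((3 * a * w) ^+ k) ((3 * a * w ^+ 2) ^+ k) => X Y Z.
  ring.
exists (6 * n)%N, 1%N; split; first by lia.
move=> i hi.
have n9 : (9 : C) != 0 by rewrite pnatr_eq0.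
apply: (mulfI n9); rewrite !Sform //; last by lia.
by rewrite !(exprD _ i (6 * n)) p1 pw pw2 !mulr1.
Qed.

Lemma part2 : a != 0 -> b = -2 * a -> c = -2 * a ->
  forall mu : nat, is_period (circulant 2 P) mu -> (6 %| mu)%N /\ (3 * a) ^+ mu = 1.
Proof.
move=> ha hb hc mu [[mu0 [k0 Hk0]] _].
have Hl := @lam_per mu k0 Hk0.
have [v1 vw vw2] := lam_vals hb hc.
have hA : 3 * a != 0 by rewrite mulf_neq0 // three_neq0.
set A := 3 * a in hA v1 vw vw2 *.
have w2n : w ^+ 2 != 0 by rewrite expf_neq0 // w_neq0.
have pz : forall z, z ^+ 3 = 1 -> z != 0 -> z * P.[z] != 0 -> (z * P.[z]) ^+ mu = 1.
  move=> z z3 hz hl; have := Hl z z3 hz 1%N k0 (leqnn _); rewrite mul1n exprD => h.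
  by apply: (mulfI (expf_neq0 k0 hl)); rewrite h mulr1.
have h1 : (1 : C) ^+ 3 = 1 by rewrite expr1n.
have e1 := pz 1 h1 (oner_neq0 _); rewrite mul1r v1 oppr_eq0 in e1; have {}e1 := e1 hA.
have ew := pz w w3 w_neq0; rewrite vw mulf_neq0 ?w_neq0 // in ew; have {}ew := ew isT.
have ew2 := pz _ w2_3 w2n; rewrite vw2 mulf_neq0 // in ew2; have {}ew2 := ew2 isT.
have hAm : A ^+ mu != 0 by rewrite expf_neq0.
have wm : w ^+ mu = 1.
  have wmn : w ^+ mu != 0 by rewrite expf_neq0 // w_neq0.
  have h2 : A ^+ mu * (w ^+ mu) ^+ 2 = 1 by rewrite -exprAC -exprMn.
  have h1' : A ^+ mu * w ^+ mu = 1 by rewrite -exprMn.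
  have : A ^+ mu * w ^+ mu = A ^+ mu * (w ^+ mu * w ^+ mu) by rewrite h1' -expr2 h2.
  move/(mulfI hAm) => h; apply/esym; apply: (mulfI wmn); by rewrite mulr1 {1}h.
have Am : A ^+ mu = 1 by move: ew; rewrite exprMn wm mulr1.
have ev : ~~ odd mu.
  apply/negP => hodd; move: e1; rewrite exprNn Am mulr1 -signr_odd hodd expr1 => h.
  have e : (2 : C) = 1 - (-1) by ring.
  by move: e; rewrite h subrr => /eqP; rewrite pnatr_eq0.
have m3 : (mu %% 3 = 0)%N.
  move: wm; rewrite wexp; move: (ltn_pmod mu (isT : (0 < 3)%N)).
  case: (mu %% 3)%N => [|[|[|//]]] // _.
  - by rewrite expr1 => /eqP; rewrite (negbTE w_neq1).
  - by move=> /eqP; rewrite (negbTE w2_neq1).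
split => //.
have m2 : (mu %% 2 = 0)%N by rewrite modn2 (negbTE ev).
apply/dvdnP; exists (mu %/ 6)%N; lia.
Qed.

End Poly.

End Main.


Theorem proposition13 (R : realType) (a b c : R[i]) :
  a * c * (a + b + c) != 0 ->
  let p : {poly R[i]} := a%:P + b *: 'X + c *: 'X^2 in
  let V := circulant 2 p in
  ((has_finite_period V /\
    eventually_periodic (fun k : nat => col_partial_sum 2 p k))
   <-> ((b = -2 * a)%R /\ (c = -2 * a)%R /\ unit_root (3 * a)%R))
  /\ (((b = -2 * a)%R /\ (c = -2 * a)%R /\ unit_root (3 * a)%R) ->
      forall mu : nat, is_period V mu -> (6 %| mu)%N /\ ((3 * a) ^+ mu = 1)%R).
Proof.
move=> habc p V.
have [w hw] := exists_w R.
have ha : a != 0 by move: habc; rewrite !mulf_eq0 negb_or => /andP [/norP []].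
split.
  split.
    by move=> [h1 h2]; exact: (@forward R w hw a b c habc h1 h2).
  by move=> [hb [hc hu]]; exact: (@backward R w hw a b c hb hc hu).
by move=> [hb [hc _]] mu hmu; exact: (@part2 R w hw a b c ha hb hc mu hmu).
Qed.
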